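(* Let $\mathbb C$ be a pointed variety of universal algebras, $A$ an algebra in $\mathbb C$, and $X,Y$ subalgebras of $A$. Then (a) $[X,Y]_{\mathbb C,A}\subseteq [X,Y]_{A\mid 1}$. (b) If $A$ is the free algebra in $\mathbb C$ on a set $S$, and $X$ and $Y$ are the subalgebras freely generated by subsets $P$ and $Q$ of $S$ respectively, with $P\cap Q=\emptyset$, then $[X,Y]_{\mathbb C,A}=[X,Y]_{A\mid 1}$.
   Context: In a pointed variety, $0$ denotes the unique constant (whose value is a one-element subalgebra). A term $t(\mathbf w_1,\dots,\mathbf w_k,\mathbf x_1,\dots,\mathbf x_m,\mathbf y_1,\dots,\mathbf y_n)$ of $\mathbb C$, with $\{\mathbf x_1,\dots,\mathbf x_m\}$ and $\{\mathbf y_1,\dots,\mathbf y_n\}$ disjoint sets of variables, is a commutator term in $(\mathbf x_1,\dots,\mathbf x_m)$ and $(\mathbf y_1,\dots,\mathbf y_n)$ if the identities $t(\mathbf w_1,\dots,\mathbf w_k,0,\dots,0,\mathbf y_1,\dots,\mathbf y_n)=0=t(\mathbf w_1,\dots,\mathbf w_k,\mathbf x_1,\dots,\mathbf x_m,0,\dots,0)$ hold in $\mathbb C$. $[X,Y]_{\mathbb C,A}$ is the set of all elements $t_A(w_1,\dots,w_k,x_1,\dots,x_m,y_1,\dots,y_n)$ of $A$ where $t$ is such a commutator term, $w_i\in A$, $x_i\in X$, $y_i\in Y$. $[X,Y]_{A\mid 1}$ is the image under the homomorphism $[1_A,x,y]\colon A+X+Y\to A$ (with $x,y$ the inclusions)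 of the kernel (preimage of $0$) of the homomorphism $\langle[\iota_1,\iota_2,0],[\iota_1,0,\iota_2]\rangle\colon A+X+Y\to (A+X)\times_A(A+Y)$, where $\iota_i$ are coproduct injections and $(A+X)\times_A(A+Y)$ is the pullback of $[1,0]\colon A+X\to A$ and $[1,0]\colon A+Y\to A$. *)

(* Defs.v *)
From mathcomp Require Import all_boot.
Set Implicit Arguments. Unset Strict Implicit. Unset Printing Implicit Defensive.

Section UA.
Variables (O : Type) (ar : O -> nat).

Inductive term (V : Type) : Type :=
| Var of V
| App (o : O) of ('I_(ar o) -> term V).

Record algebra := Algebra {
  carrier :> Type;
  op : forall o : O, ('I_(ar o) -> carrier) -> carrier }.

Arguments op {a} o _.

Fixpoint eval (A : algebra) (V : Type) (env : V -> A) (t : term V) : A :=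
  match t with
  | Var v => env v
  | App o ts => op o (fun i => eval env (ts i))
  end.

(* A variety C is presented by a set E of identities (pairs of terms in
   variables indexed by nat); A is in C iff A satisfies every identity of E. *)
Definition models (E : term nat -> term nat -> Prop) (A : algebra) : Prop :=
  forall s t, E s t -> forall env : nat -> A, eval env s = eval env t.

Definition is_hom (A B : algebra) (f : A -> B) : Prop :=
  forall o (args : 'I_(ar o) -> A), f (op o args) = op o (fun i => f (args i)).

Definition void_env (A : algebra) : void -> A := fun v => match v with end.
Definition zero (z : term void) (A : algebra) : A := eval (@void_env A) z.

(* C is pointed, with constant 0 given by the closed term z: in every algebra
   of C all closed terms (constants) coincide with 0. *)
Definition pointed (E : term nat -> term nat -> Prop) (z : term void) : Prop :=
  forall A : algebra, models E A ->
    forall t : term void, eval (@void_env A) t = zero z A.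

Definition is_subalg (A : algebra) (X : A -> Prop) : Prop :=
  forall o (args : 'I_(ar o) -> A), (forall i, X (args i)) -> X (op o args).

Definition subalg (A : algebra) (X : A -> Prop) (HX : is_subalg X) : algebra :=
  @Algebra {a : A | X a}
    (fun o args => exist _ (op o (fun i => sval (args i)))
                          (HX o _ (fun i => svalP (args i)))).

Definition generated_by (S : Type) (A : algebra) (eta : S -> A) (P : S -> Prop)
  (a : A) : Prop :=
  forall Z : A -> Prop, is_subalg Z ->
    (forall s, P s -> Z (eta s)) -> Z a.

Definition is_free (E : term nat -> term nat -> Prop) (S : Type) (A : algebra)
  (eta : S -> A) : Prop :=
  models E A /\
  forall B : algebra, models E B -> forall g : S -> B,
    exists h : A -> B, [/\ is_hom h, (forall s, h (eta s) = g s) &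
      forall h' : A -> B, is_hom h' -> (forall s, h' (eta s) = g s) ->
        forall a, h' a = h a].

Definition is_coprod2 (E : term nat -> term nat -> Prop) (A1 A2 K : algebra)
  (i1 : A1 -> K) (i2 : A2 -> K) : Prop :=
  [/\ models E K, is_hom i1, is_hom i2 &
  forall B : algebra, models E B -> forall (f1 : A1 -> B) (f2 : A2 -> B),
    is_hom f1 -> is_hom f2 ->
    exists h : K -> B, [/\ is_hom h, (forall x, h (i1 x) = f1 x),
      (forall x, h (i2 x) = f2 x) &
      forall h' : K -> B, is_hom h' -> (forall x, h' (i1 x) = f1 x) ->
        (forall x, h' (i2 x) = f2 x) -> forall k, h' k = h k]].

Definition is_coprod3 (E : term nat -> term nat -> Prop) (A1 A2 A3 K : algebra)
  (i1 : A1 -> K) (i2 : A2 -> K) (i3 : A3 -> K) : Prop :=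
  [/\ models E K, is_hom i1, is_hom i2, is_hom i3 &
  forall B : algebra, models E B ->
    forall (f1 : A1 -> B) (f2 : A2 -> B) (f3 : A3 -> B),
    is_hom f1 -> is_hom f2 -> is_hom f3 ->
    exists h : K -> B, [/\ is_hom h, (forall x, h (i1 x) = f1 x),
      (forall x, h (i2 x) = f2 x), (forall x, h (i3 x) = f3 x) &
      forall h' : K -> B, is_hom h' -> (forall x, h' (i1 x) = f1 x) ->
        (forall x, h' (i2 x) = f2 x) -> (forall x, h' (i3 x) = f3 x) ->
        forall k, h' k = h k]].

Inductive cvar := Wv of nat | Xv of nat | Yv of nat.

(* t is a commutator term in the x's and y's: the identities
   t(w,0,y) = 0 = t(w,x,0) hold in C. *)
Definition is_commutator_term (E : term nat -> term nat -> Prop)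
  (z : term void) (t : term cvar) : Prop :=
  forall B : algebra, models E B -> forall env : cvar -> B,
    ((forall n, env (Xv n) = zero z B) -> eval env t = zero z B) /\
    ((forall n, env (Yv n) = zero z B) -> eval env t = zero z B).

Definition commC (E : term nat -> term nat -> Prop) (z : term void)
  (A : algebra) (X Y : A -> Prop) (a : A) : Prop :=
  exists (t : term cvar) (env : cvar -> A),
    [/\ is_commutator_term E z t, (forall n, X (env (Xv n))),
        (forall n, Y (env (Yv n))) & a = eval env t].

(* [X,Y]_{A|1}, computed w.r.t. given coproducts K = A+X+Y (injections
   kA,kX,kY), L = A+X (lA,lX), M = A+Y (mA,mY).  An element k of K lies in
   the kernel of <[i1,i2,0],[i1,0,i2]> : K -> L x_A M iff both components
   are 0 (the zero of the pullback is (0,0)); [1_A,x,y] : K -> A is the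
   copairing of the identity and the two inclusions. The copairings exist
   and are unique by the coproduct property, so "for every hom satisfying
   the defining equations" denotes that unique map. *)
Definition comm1 (z : term void) (A : algebra) (X Y : A -> Prop)
  (HX : is_subalg X) (HY : is_subalg Y)
  (K : algebra) (kA : A -> K) (kX : subalg HX -> K) (kY : subalg HY -> K)
  (L : algebra) (lA : A -> L) (lX : subalg HX -> L)
  (M : algebra) (mA : A -> M) (mY : subalg HY -> M) (a : A) : Prop :=
  exists k : K,
    [/\ (forall f : K -> L, is_hom f -> (forall x, f (kA x) = lA x) ->
           (forall x, f (kX x) = lX x) -> (forall y, f (kY y) = zero z L) ->
           f k = zero z L),
        (forall g : K -> M, is_hom g -> (forall x, g (kA x) = mA x) ->
           (forall x, g (kX x) = zero z M) -> (forall y, g (kY y) = mY y) ->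
           g k = zero z M) &
        (forall h : K -> A, is_hom h -> (forall x, h (kA x) = x) ->
           (forall x, h (kX x) = sval x) -> (forall y, h (kY y) = sval y) ->
           h k = a)].

End UA.

(* Main.v *)
Require Import Defs.
From mathcomp Require Import all_boot.
From Stdlib Require Import ClassicalEpsilon ProofIrrelevance FunctionalExtensionality.
From Stdlib Require List.
Set Implicit Arguments. Unset Strict Implicit.

Section P.
Variables (O : Type) (ar : O -> nat).
Local Notation term := (term ar).
Local Notation algebra := (algebra ar).

Lemma eval_ext (A : algebra) V (e1 e2 : V -> A) (t : term V) :
  (forall v, e1 v = e2 v) -> eval e1 t = eval e2 t.
Proof.
move=> H; elim: t => [v|o ts IH] /=; first exact: H.
f_equal; apply: functional_extensionality => i; exact: IH.
Qed.

Lemma eval_hom (A B : algebra) (f : A -> B) V (e : V -> A) (t : term V) :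
  is_hom f -> f (eval e t) = eval (fun v => f (e v)) t.
Proof.
move=> Hf; elim: t => [v|o ts IH] //=.
rewrite Hf; f_equal; apply: functional_extensionality => i; exact: IH.
Qed.

Fixpoint rename V W (r : V -> W) (t : term V) : term W :=
  match t with
  | Var v => Var ar (r v)
  | App o ts => App (fun i => rename r (ts i))
  end.

Lemma eval_rename (A : algebra) V W (r : V -> W) (e : W -> A) (t : term V) :
  eval e (rename r t) = eval (fun v => e (r v)) t.
Proof.
elim: t => [v|o ts IH] //=.
f_equal; apply: functional_extensionality => i; exact: IH.
Qed.

Lemma zero_hom z (A B : algebra) (f : A -> B) : is_hom f -> f (zero z A) = zero z B.
Proof.
move=> Hf; rewrite /zero eval_hom //; apply: eval_ext; by case.
Qed.

Lemma sval_hom (A : algebra) (X : A -> Prop) (HX : is_subalg X) :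
  @is_hom _ ar (subalg HX) A (@sval _ _).
Proof. by []. Qed.

Lemma sig_eq (A : Type) (X : A -> Prop) (x y : {a | X a}) : sval x = sval y -> x = y.
Proof. case: x => a Ha; case: y => b Hb /= e; exact: subset_eq_compat. Qed.

Lemma sub_models E (A : algebra) (X : A -> Prop) (HX : is_subalg X) :
  models E A -> models E (subalg HX).
Proof.
move=> HA s t Est env; apply: sig_eq.
rewrite !(eval_hom _ _ (@sval_hom A X HX)); exact: HA.
Qed.

Lemma subalg_const (A : algebra) (X : A -> Prop) (HX : is_subalg X) (t : term void) :
  X (eval (@void_env _ ar A) t).
Proof. elim: t => [[]|o ts IH] /=; exact: HX. Qed.

Definition range (A : algebra) V (e : V -> A) (a : A) := exists t : term V, eval e t = a.

Lemma range_subalg (A : algebra) V (e : V -> A) : is_subalg (range e).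
Proof.
move=> o args H.
exists (App (fun i => proj1_sig (constructive_indefinite_description _ (H i)))) => /=.
f_equal; apply: functional_extensionality => i.
exact: (proj2_sig (constructive_indefinite_description _ (H i))).
Qed.

Lemma free_gen E S (A : algebra) (eta : S -> A) :
  is_free E eta -> forall a, range eta a.
Proof.
case=> HA Hu a.
have HR := @range_subalg A S eta.
have [j [hj ej _]] := Hu _ (@sub_models E A _ HR HA)
   (fun s => exist _ (eta s) (ex_intro _ (Var ar s) erefl)).
have [h0 [_ _ U]] := Hu _ HA eta.
have e1 := U id (fun _ _ => erefl) (fun _ => erefl) a.
have e2 := U (fun x => sval (j x)) (fun o args => f_equal (@sval _ _) (hj o args))
             (fun s => f_equal (@sval _ _) (ej s)) a.
simpl in e1, e2. rewrite -e1 in e2. rewrite -e2. exact: svalP.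
Qed.


Lemma gen_in (A : algebra) S (eta : S -> A) (P : S -> Prop) (Z : A -> Prop) :
  is_subalg Z -> (forall s, P s -> Z (eta s)) -> forall a, generated_by eta P a -> Z a.
Proof. move=> HZ Hb a Ha; exact: Ha. Qed.

Lemma part_a E z (A : algebra) (X Y : A -> Prop) (HX : is_subalg X) (HY : is_subalg Y)
  (K : algebra) (kA : A -> K) (kX : subalg HX -> K) (kY : subalg HY -> K)
  (L : algebra) (lA : A -> L) (lX : subalg HX -> L)
  (M : algebra) (mA : A -> M) (mY : subalg HY -> M) :
  is_coprod3 E kA kX kY -> is_coprod2 E lA lX -> is_coprod2 E mA mY ->
  forall a : A, @commC O ar E z A X Y a -> @comm1 O ar z A X Y HX HY K kA kX kY L lA lX M mA mY a.
Proof.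
move=> _ [HL _ _ _] [HM _ _ _] a [t [env [Ht HXe HYe ->]]].
pose e (c : cvar) : K := match c with
  | Wv n => kA (env (Wv n))
  | Xv n => kX (exist _ (env (Xv n)) (HXe n))
  | Yv n => kY (exist _ (env (Yv n)) (HYe n)) end.
exists (eval e t); split.
- move=> f hf e1 e2 e3; rewrite eval_hom //.
  apply: (proj2 (Ht L HL _)) => n /=; exact: e3.
- move=> g hg e1 e2 e3; rewrite eval_hom //.
  apply: (proj1 (Ht M HM _)) => n /=; exact: e2.
- move=> h hh e1 e2 e3; rewrite eval_hom //; apply: eval_ext; case=> n /=.
  + exact: e1.
  + exact: (e2 (exist _ _ _)).
  + exact: (e3 (exist _ _ _)).
Qed.

Lemma const_hom E z (M : algebra) (B : algebra) :
  pointed E z -> models E M -> @is_hom _ ar B M (fun _ => zero z M).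
Proof.
move=> Hp HM o args.
symmetry; exact: (Hp M HM (App (o := o) (fun _ => z))).
Qed.

Fixpoint vars V (t : term V) : list V :=
  match t with
  | Var v => v :: nil
  | App o ts => List.flat_map (fun i => vars (ts i)) (enum 'I_(ar o))
  end.

Lemma mem_In (T : eqType) (x : T) (s : seq T) : x \in s -> List.In x s.
Proof.
elim: s => [|y s IH] //=; rewrite in_cons => /orP [/eqP ->|H]; [by left|right; exact: IH].
Qed.

Lemma eval_ext_in (A : algebra) V (e1 e2 : V -> A) (t : term V) :
  (forall v, List.In v (vars t) -> e1 v = e2 v) -> eval e1 t = eval e2 t.
Proof.
elim: t => [v|o ts IH] H /=; first by apply: H; left.
f_equal; apply: functional_extensionality => i; apply: IH => v Hv; apply: H.
apply/List.in_flat_map; exists i; split => //; apply: mem_In; exact: mem_enum.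
Qed.

Definition eqd T (x y : T) : bool :=
  if excluded_middle_informative (x = y) then true else false.

Lemma nth_find T R (F : T -> R) d v (l : seq T) :
  List.In v l -> nth d (map F l) (find (eqd v) l) = F v.
Proof.
elim: l => [|x l IH] //= Hin; rewrite /eqd.
case: excluded_middle_informative => [ev|ne] /=; first by rewrite ev.
case: Hin => [ex|Hin]; first by case: ne.
exact: IH.
Qed.

Lemma nth_map_in T R (Z : R -> Prop) (F : T -> R) d (l : seq T) n :
  (forall x, Z (F x)) -> Z d -> Z (nth d (map F l) n).
Proof. move=> HF Hd; elim: l n => [|x l IH] [|n] //=. Qed.

Section B.
Variables (E : term nat -> term nat -> Prop) (A : algebra) (S : Type) (eta : S -> A)
  (Hfree : is_free E eta) (P Q : S -> Prop) (X Y : A -> Prop)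
  (HX : is_subalg X) (HY : is_subalg Y)
  (HXg : forall a, X a <-> generated_by eta P a)
  (HYg : forall a, Y a <-> generated_by eta Q a).

Lemma pfX (p : {s | P s}) : X (eta (sval p)).
Proof. apply/HXg => Z _ Hb; exact: Hb (svalP p). Qed.
Lemma pfY (p : {s | Q s}) : Y (eta (sval p)).
Proof. apply/HYg => Z _ Hb; exact: Hb (svalP p). Qed.

Definition VV := ((S + {s | P s}) + {s | Q s})%type.

Definition envK (K : algebra) (kA : A -> K) (kX : subalg HX -> K) (kY : subalg HY -> K)
  (v : VV) : K :=
  match v with
  | inl (inl s) => kA (eta s)
  | inl (inr p) => kX (exist _ (eta (sval p)) (pfX p))
  | inr q => kY (exist _ (eta (sval q)) (pfY q))
  end.

Lemma K_gen (K : algebra) (kA : A -> K) (kX : subalg HX -> K) (kY : subalg HY -> K) :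
  is_coprod3 E kA kX kY -> forall k, range (envK kA kX kY) k.
Proof.
case=> HK hA hX hY U.
set e := envK kA kX kY.
have HR := @range_subalg K VV e.
have inA : forall a, range e (kA a).
  move=> a; have [t <-] := free_gen Hfree a.
  exists (rename (fun s => inl (inl s)) t); rewrite eval_rename eval_hom //.
have inX : forall x, range e (kX x).
  case=> a Ha.
  suff : X a /\ forall H, range e (kX (exist _ a H)) by case=> _; apply.
  apply: (@gen_in A S eta P (fun b => X b /\ forall H, range e (kX (exist _ b H))) _ _ a); last by apply/HXg.
    move=> o args Hi; split; first by apply: HX => i; case: (Hi i).
    move=> H.
    have -> : exist X (op args) H =
      @op _ _ (subalg HX) o (fun i => exist _ (args i) (proj1 (Hi i))) by apply: sig_eq.
    rewrite hX; apply: HR => i; exact: (proj2 (Hi i)).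
  move=> s Ps; split; first exact: (pfX (exist _ s Ps)).
  move=> H; exists (Var ar (inl (inr (exist _ s Ps)))) => /=.
  by congr kX; apply: sig_eq.
have inY : forall x, range e (kY x).
  case=> a Ha.
  suff : Y a /\ forall H, range e (kY (exist _ a H)) by case=> _; apply.
  apply: (@gen_in A S eta Q (fun b => Y b /\ forall H, range e (kY (exist _ b H))) _ _ a); last by apply/HYg.
    move=> o args Hi; split; first by apply: HY => i; case: (Hi i).
    move=> H.
    have -> : exist Y (op args) H =
      @op _ _ (subalg HY) o (fun i => exist _ (args i) (proj1 (Hi i))) by apply: sig_eq.
    rewrite hY; apply: HR => i; exact: (proj2 (Hi i)).
  move=> s Ps; split; first exact: (pfY (exist _ s Ps)).
  move=> H; exists (Var ar (inr (exist _ s Ps))) => /=.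
  by congr kY; apply: sig_eq.
have h1 : @is_hom _ ar A (subalg HR) (fun a => exist _ (kA a) (inA a)).
  by move=> o args; apply: sig_eq; exact: hA.
have h2 : @is_hom _ ar (subalg HX) (subalg HR) (fun a => exist _ (kX a) (inX a)).
  by move=> o args; apply: sig_eq; exact: hX.
have h3 : @is_hom _ ar (subalg HY) (subalg HR) (fun a => exist _ (kY a) (inY a)).
  by move=> o args; apply: sig_eq; exact: hY.
have [j [hj ej1 ej2 ej3 _]] := U _ (@sub_models E K _ HR HK) _ _ _ h1 h2 h3.
have [h0 [_ _ _ _ U0]] := U _ HK kA kX kY hA hX hY.
move=> k.
have e1 := U0 id (fun _ _ => erefl) (fun _ => erefl) (fun _ => erefl) (fun _ => erefl) k.
have e2 := U0 (fun x => sval (j x)) (fun o args => f_equal (@sval _ _) (hj o args))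
   (fun s => f_equal (@sval _ _) (ej1 s)) (fun s => f_equal (@sval _ _) (ej2 s))
   (fun s => f_equal (@sval _ _) (ej3 s)) k.
simpl in e1, e2. rewrite -e1 in e2. rewrite -e2. exact: svalP.
Qed.

Variable (z : term void) (Hpointed : pointed E z).

Let zA := zero z A.

Definition rho (l : seq VV) (v : VV) : cvar :=
  match v with
  | inl (inl _) => Wv (find (eqd v) l)
  | inl (inr _) => Xv (find (eqd v) l)
  | inr _ => Yv (find (eqd v) l)
  end.

Definition envV (v : VV) : A :=
  match v with inl (inl s) => eta s | inl (inr p) => eta (sval p) | inr q => eta (sval q) end.
Definition envXV (v : VV) : A :=
  match v with inl (inr p) => eta (sval p) | _ => zA end.
Definition envYV (v : VV) : A :=
  match v with inr q => eta (sval q) | _ => zA end.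

Definition envA (l : seq VV) (c : cvar) : A :=
  match c with
  | Wv n => nth zA (map envV l) n
  | Xv n => nth zA (map envXV l) n
  | Yv n => nth zA (map envYV l) n
  end.

Lemma envA_rho l v : List.In v l -> envA l (rho l v) = envV v.
Proof. by case: v => [[s|p]|q] /= H; rewrite nth_find. Qed.

Definition ext (B : algebra) (R : S -> Prop) (G : {s | R s} -> B) (d : B) (s : S) : B :=
  match excluded_middle_informative (R s) with
  | left H => G (exist _ s H)
  | right _ => d end.

Lemma ext_sval (B : algebra) (R : S -> Prop) (G : {s | R s} -> B) d p :
  ext G d (sval p) = G p.
Proof.
case: p => s H; rewrite /ext /=; case: excluded_middle_informative => [H'|//].
by rewrite (proof_irrelevance _ H H').
Qed.

Lemma hom_ext (B : algebra) (g : S -> B) : models E B ->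
  exists psi : A -> B, is_hom psi /\ forall s, psi (eta s) = g s.
Proof. move=> HB; have [h [? ? _]] := proj2 Hfree B HB g; by exists h. Qed.

Lemma part_b (K : algebra) (kA : A -> K) (kX : subalg HX -> K)
          (kY : subalg HY -> K)
          (L : algebra) (lA : A -> L) (lX : subalg HX -> L)
          (M : algebra) (mA : A -> M) (mY : subalg HY -> M) :
  is_coprod3 E kA kX kY -> is_coprod2 E lA lX -> is_coprod2 E mA mY ->
  forall a : A, @comm1 O ar z A X Y HX HY K kA kX kY L lA lX M mA mY a -> @commC O ar E z A X Y a.
Proof.
move=> cK cL cM a [k [Hf Hg Hh]].
have [t et] := K_gen cK k.
set e := envK kA kX kY in et.
set l := vars t.
have [HK hA hX hY UK] := cK.
have [HL hlA hlX UL] := cL.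
have [HM hmA hmY UM] := cM.
have HAm := proj1 Hfree.
exists (rename (rho l) t), (envA l); split.
- move=> B HB env; split => Hz.
  +
    have [g [hg g1 g2 g3 _]] := UK M HM mA (fun _ => zero z M) mY hmA
       (@const_hom E z M _ Hpointed HM) hmY.
    have gk := Hg g hg g1 g2 g3.
    have [psiA [hpA epA]] := hom_ext (fun s => env (rho l (inl (inl s)))) HB.
    have [psiQ [hpQ epQ]] := hom_ext
       (ext (fun q => env (rho l (inr q))) (zero z B)) HB.
    have hpQ' : @is_hom _ ar (subalg HY) B (fun y => psiQ (sval y)).
      by move=> o args; exact: hpQ.
    have [phi [hphi p1 p2 _]] := UM B HB psiA _ hpA hpQ'.
    rewrite eval_rename.
    have -> : eval (fun v => env (rho l v)) t = eval (fun v => phi (g (e v))) t.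
      apply: eval_ext; case=> [[s|p]|q] /=.
      * by rewrite g1 p1 epA.
      * by rewrite g2 zero_hom // Hz.
      * by rewrite g3 p2 /= epQ ext_sval.
    by rewrite -eval_hom // -eval_hom // et gk zero_hom.
  + have [f [hf f1 f2 f3 _]] := UK L HL lA lX (fun _ => zero z L) hlA hlX
       (@const_hom E z L _ Hpointed HL).
    have fk := Hf f hf f1 f2 f3.
    have [psiA [hpA epA]] := hom_ext (fun s => env (rho l (inl (inl s)))) HB.
    have [psiP [hpP epP]] := hom_ext
       (ext (fun p => env (rho l (inl (inr p)))) (zero z B)) HB.
    have hpP' : @is_hom _ ar (subalg HX) B (fun y => psiP (sval y)).
      by move=> o args; exact: hpP.
    have [phi [hphi p1 p2 _]] := UL B HB psiA _ hpA hpP'.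
    rewrite eval_rename.
    have -> : eval (fun v => env (rho l v)) t = eval (fun v => phi (f (e v))) t.
      apply: eval_ext; case=> [[s|p]|q] /=.
      * by rewrite f1 p1 epA.
      * by rewrite f2 p2 /= epP ext_sval.
      * by rewrite f3 zero_hom // Hz.
    by rewrite -eval_hom // -eval_hom // et fk zero_hom.
- move=> n /=; apply: nth_map_in; last exact: subalg_const.
  case=> [[s|p]|q] /=; try exact: subalg_const; exact: pfX.
- move=> n /=; apply: nth_map_in; last exact: subalg_const.
  case=> [[s|p]|q] /=; try exact: subalg_const; exact: pfY.
- have hsX : @is_hom _ ar (subalg HX) A (@sval _ _) by [].
  have hsY : @is_hom _ ar (subalg HY) A (@sval _ _) by [].
  have hid : @is_hom _ ar A A id by [].
  have [h [hh h1 h2 h3 _]] := UK A HAm id _ _ hid hsX hsY.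
  rewrite -(Hh h hh h1 h2 h3) -et eval_rename eval_hom //.
  apply: eval_ext_in => v Hv; rewrite envA_rho //.
  by case: v {Hv} => [[s|p]|q] /=; rewrite ?h1 ?h2 ?h3.
Qed.

End B.
End P.

Theorem proposition7p5 (O : Type) (ar : O -> nat)
  (E : term ar nat -> term ar nat -> Prop) (z : term ar void)
  (Hpointed : pointed E z)
  (A : algebra ar) (HA : models E A)
  (X Y : A -> Prop) (HX : is_subalg X) (HY : is_subalg Y) :
  (* (a) *)
  (forall (K : algebra ar) (kA : A -> K) (kX : subalg HX -> K)
          (kY : subalg HY -> K)
          (L : algebra ar) (lA : A -> L) (lX : subalg HX -> L)
          (M : algebra ar) (mA : A -> M) (mY : subalg HY -> M),
     is_coprod3 E kA kX kY -> is_coprod2 E lA lX -> is_coprod2 E mA mY ->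
     forall a : A, @commC O ar E z A X Y a -> @comm1 O ar z A X Y HX HY K kA kX kY L lA lX M mA mY a)
  /\
  (* (b) *)
  (forall (S : Type) (eta : S -> A), is_free E eta ->
   forall P Q : S -> Prop, (forall s, P s -> Q s -> False) ->
   (forall a, X a <-> generated_by eta P a) ->
   (forall a, Y a <-> generated_by eta Q a) ->
   forall (K : algebra ar) (kA : A -> K) (kX : subalg HX -> K)
          (kY : subalg HY -> K)
          (L : algebra ar) (lA : A -> L) (lX : subalg HX -> L)
          (M : algebra ar) (mA : A -> M) (mY : subalg HY -> M),
     is_coprod3 E kA kX kY -> is_coprod2 E lA lX -> is_coprod2 E mA mY ->
     forall a : A, @commC O ar E z A X Y a <-> @comm1 O ar z A X Y HX HY K kA kX kY L lA lX M mA mY a).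

Proof.
split.
- move=> K kA kX kY L lA lX M mA mY cK cL cM a; exact: part_a.
- move=> S eta Hfree P Q _ HXg HYg K kA kX kY L lA lX M mA mY cK cL cM a; split.
  + exact: part_a.
  + exact: (@part_b O ar E A S eta Hfree P Q X Y HX HY HXg HYg z Hpointed K kA kX kY L lA lX M mA mY cK cL cM a).
Qed.
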